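(* Let $(\mathcal{G},v_0)$ be an initialized quantitative reachability game and $(\mathcal{X},x_0)$ its initialized extended game. A play $\rho^0\in\mathrm{Plays}_X(x_0)$ is the outcome of a subgame perfect equilibrium in $(\mathcal{X},x_0)$ if and only if $\rho^0\in\Lambda^*(x_0)$.
   Context: Games: an arena $G=(\Pi,V,(V_i)_{i\in\Pi},E)$ has finite player set $\Pi$, finite vertex set $V$ ($|V|\ge2$, $|\Pi|\le|V|$), a partition $(V_i)$ of $V$, and edges $E$ with every vertex having a successor. Plays are infinite paths, histories finite ones. A quantitative reachability game has target sets $F_i\subseteq V$ and $\mathrm{Cost}_i(\rho)=$ least $k$ with $\rho_k\in F_i$ (or $+\infty$). Strategies map histories ending in $V_i$ to successors; a profile $\sigma$ has outcome $\langle\sigma\rangle_{v_0}$ from $v_0$. $\sigma$ is a Nash equilibrium if no player $i$ can strictly decrease $\mathrm{Cost}_i$ of the outcome by changing only his own strategy; it is a subgame perfect equilibrium (SPE) if for every history $hv$ from the initial vertex, the profile $\sigma_{|h}$ ($\sigma_{i|h}(h')=\sigma_i(hh')$) is a Nash equilibrium in the subgame from $v$ with costs $\rho\mapsto\mathrm{Cost}_i(h\rho)$. Extended game: $\mathcal{X}$ is the reachability game on the arena $X=(\Pi,V^X,(V^X_i),E^X)$ with $V^X=V\times 2^\Pi$, $((v,I),(v',I'))\in E^X$ iff $(v,v')\in E$ and $I'=I\cup\{i\in\Pi: v'\in F_i\}$, $(v,I)\in V^X_i$ iff $v\in V_i$, target sets $F^X_i=\{(v,I): i\in I\}$, and reachability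 costs $\mathrm{Cost}_i$ with respect to these targets; $x_0=(v_0,I_0)$ with $I_0=\{i: v_0\in F_i\}$. For $u\in V^X$, $I(u)$ is its second component; $\mathrm{Plays}_X(u)$ are the plays of $X$ from $u$. Let $\mathcal{I}$ be the set of sets $I$ such that some $(v,I)$ is reachable from $x_0$, $N=|\mathcal{I}|$; the relation $I<I'$ iff $I\ne I'$ and some $(v',I')$ is reachable from some $(v,I)$ is a partial order on $\mathcal{I}$, and a fixed total order $J_1<\dots<J_N$ of $\mathcal{I}$ extends it. $V^{\ge J_n}=\{(v,J_m): v\in V, m\ge n\}$. Labelings: for $\lambda:V^X\to\mathbb{N}\cup\{+\infty\}$, a play $\rho$ of $X$ is $\lambda$-consistent if $\mathrm{Cost}_i(\rho_{\ge n})\le\lambda(\rho_n)$ for all $n$ and all $i$ with $\rho_n\in V^X_i$ (where $\rho_{\ge n}=\rho_n\rho_{n+1}\dots$). The sequence $(\lambda^k)$: $\lambda^0(u)=0$ if $u\in V^X_i$ and $i\in I(u)$, and $+\infty$ otherwise. The update of $\lambda^k$ w.r.t. $V^{\ge J_n}$ is $\lambda^{k+1}$ with $\lambda^{k+1}(u)=\lambda^k(u)$ for $u\notin V^{\ge J_n}$, and for $u\in V^{\ge J_n}\cap V^X_i$: $\lambda^{k+1}(u)=0$ if $i\in I(u)$, otherwise $\lambda^{k+1}(u)=1+\min_{(u,u')\in E^X}\sup\{\mathrm{Cost}_i(\rho):\rho\in\Lambda^k(u')\}$ (with $1+(+\infty)=+\infty$), where $\Lambda^k(u')$ is the set of $\lambda^k$-consistent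 plays from $u'$. The sequence is generated with $n_0=N$, $\lambda^{k+1}=$ update of $\lambda^k$ w.r.t. $V^{\ge J_{n_k}}$, and $n_{k+1}=n_k-1$ if $\lambda^{k+1}=\lambda^k$ and $n_k>1$, $n_{k+1}=n_k$ otherwise. This sequence eventually becomes constant: there is $k^*$ with $\lambda^{k^*+m}=\lambda^{k^*}$ for all $m$; $\lambda^*:=\lambda^{k^*}$ and $\Lambda^*(u)$ is the set of $\lambda^*$-consistent plays from $u$. *)

(* Defs.v *)
From Stdlib Require Import ClassicalEpsilon.
From mathcomp Require Import all_boot.
Set Implicit Arguments. Unset Strict Implicit. Unset Printing Implicit Defensive.

(* N ∪ {+oo}: [Some n] is the natural n, [None] is +oo.                *)
Definition ninf := option nat.

Definition ninf_le (a b : ninf) : bool :=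
  match a, b with
  | _, None => true
  | None, Some _ => false
  | Some x, Some y => x <= y
  end.

Definition ninf_lt (a b : ninf) : bool := ninf_le a b && (a != b).

Definition ninf_succ (a : ninf) : ninf := omap S a.

Definition is_lub (S : ninf -> Prop) (s : ninf) : Prop :=
  (forall x, S x -> ninf_le x s) /\
  (forall t, (forall x, S x -> ninf_le x t) -> ninf_le s t).

Definition is_glb (S : ninf -> Prop) (s : ninf) : Prop :=
  (forall x, S x -> ninf_le s x) /\
  (forall t, (forall x, S x -> ninf_le t x) -> ninf_le t s).

Definition ninf_sup (S : ninf -> Prop) : ninf := epsilon (inhabits None) (is_lub S).
Definition ninf_inf (S : ninf -> Prop) : ninf := epsilon (inhabits None) (is_glb S).

Definition rcost (T : Type) (target : T -> bool) (rho : nat -> T) : ninf :=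
  ninf_inf (fun c => exists k, target (rho k) /\ c = Some k).

Definition is_play (T : Type) (e : rel T) (rho : nat -> T) : Prop :=
  forall n, e (rho n) (rho n.+1).

Section Extended.
Variables (Pi V : finType) (owner : V -> Pi) (E : rel V) (F : Pi -> {set V}).

Definition VX := (V * {set Pi})%type.

Definition EX : rel VX := fun u u' =>
  E u.1 u'.1 && (u'.2 == u.2 :|: [set i | u'.1 \in F i]).

Definition ownerX (u : VX) : Pi := owner u.1.

Definition targetX (i : Pi) (u : VX) : bool := i \in u.2.

Definition CostX (i : Pi) (rho : nat -> VX) : ninf := rcost (targetX i) rho.

Definition x0_of (v0 : V) : VX := (v0, [set i | v0 \in F i]).

(* A strategy of player i is a function [s : seq VX -> VX -> VX]:      *)
(* [s h v] is the successor chosen after the history [h ++ [:: v]]     *)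
(* (only relevant when v belongs to player i).                          *)
Definition strategy := seq VX -> VX -> VX.
Definition profile := Pi -> strategy.

Definition valid_strategy (i : Pi) (s : strategy) : Prop :=
  forall h v, ownerX v = i -> EX v (s h v).

Definition valid_profile (sigma : profile) : Prop :=
  forall i, valid_strategy i (sigma i).

(* outcome of sigma_{|h} from v: the play v = rho_0 rho_1 ... with
   rho_{n+1} = sigma_{owner rho_n}(h rho_0 ... rho_n) *)
Definition out_step (sigma : profile) (st : VX * seq VX) : VX * seq VX :=
  (sigma (ownerX st.1) st.2 st.1, rcons st.2 st.1).

Definition outcome (sigma : profile) (h : seq VX) (v : VX) : nat -> VX :=
  fun n => (iter n (out_step sigma) (v, h)).1.

Definition concat_play (h : seq VX) (rho : nat -> VX) : nat -> VX :=
  fun k => if k < size h then nth (rho 0) h k else rho (k - size h).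

Definition deviate (sigma : profile) (i : Pi) (tau : strategy) : profile :=
  fun j => if j == i then tau else sigma j.

(* sigma_{|h} is a Nash equilibrium of the subgame from v,
   with costs rho |-> Cost_i(h rho) *)
Definition NE_sub (sigma : profile) (h : seq VX) (v : VX) : Prop :=
  forall (i : Pi) (tau : strategy), valid_strategy i tau ->
    ~~ ninf_lt (CostX i (concat_play h (outcome (deviate sigma i tau) h v)))
               (CostX i (concat_play h (outcome sigma h v))).

(* h ++ [:: v] is a history (finite path of X) starting at x0 *)
Definition is_history (x0 : VX) (h : seq VX) (v : VX) : Prop :=
  match h with
  | [::] => v = x0
  | a :: t => a = x0 /\ path EX a (rcons t v)
  end.

Definition SPE (x0 : VX) (sigma : profile) : Prop :=
  valid_profile sigma /\ forall h v, is_history x0 h v -> NE_sub sigma h v.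

Definition labeling := VX -> ninf.

Definition consistent (lam : labeling) (rho : nat -> VX) : Prop :=
  forall n, ninf_le (CostX (ownerX (rho n)) (fun k => rho (n + k))) (lam (rho n)).

Definition Lambda (lam : labeling) (u : VX) (rho : nat -> VX) : Prop :=
  is_play EX rho /\ rho 0 = u /\ consistent lam rho.

Definition lam0 : labeling := fun u => if ownerX u \in u.2 then Some 0 else None.

(* J : the fixed total order J_0 < ... < J_{N-1} (0-based) of the reachable sets;
   u \in V^{>= J_n}  iff  u.2 \in drop n J *)
Definition update (J : seq {set Pi}) (lam : labeling) (n : nat) : labeling :=
  fun u =>
    if u.2 \in drop n J then
      let i := ownerX u in
      if i \in u.2 then Some 0
      else ninf_succ (ninf_inf (fun c => exists u', EX u u' /\
             c = ninf_sup (fun d => exists rho, Lambda lam u' rho /\ d = CostX i rho)))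
    else lam u.

(* (lambda^k, n_k), with 0-based index n_k (n_0 = N-1) *)
Fixpoint lam_seq (J : seq {set Pi}) (k : nat) : labeling * nat :=
  match k with
  | 0 => (lam0, (size J).-1)
  | k'.+1 =>
      let (l, n) := lam_seq J k' in
      let l' := update J l n in
      (l', if [forall u, l' u == l u] && (0 < n) then n.-1 else n)
  end.

End Extended.

(* Main.v *)
Require Import Defs.
From Stdlib Require Import ClassicalEpsilon Classical FunctionalExtensionality.
From mathcomp Require Import all_boot zify.
Set Implicit Arguments. Unset Strict Implicit. Unset Printing Implicit Defensive.


Lemma nle_refl x : ninf_le x x.
Proof. by case: x => //= n. Qed.

Lemma nle_trans y x z : ninf_le x y -> ninf_le y z -> ninf_le x z.
Proof. case: x; case: y; case: z => //= a b c. exact: leq_trans. Qed.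

Lemma nle_total x y : ninf_le x y || ninf_le y x.
Proof. case: x; case: y => //= a b. exact: leq_total. Qed.

Lemma nle_anti x y : ninf_le x y -> ninf_le y x -> x = y.
Proof. case: x; case: y => //= a b h1 h2. by rewrite (@anti_leq a b) ?h1 ?h2. Qed.

Lemma nle_None x : ninf_le x None.
Proof. by case: x. Qed.

Lemma nle_0 x : ninf_le (Some 0) x.
Proof. by case: x. Qed.

Lemma nlt_le a b : ~~ ninf_lt a b -> ninf_le b a.
Proof.
rewrite /ninf_lt negb_and negbK => /orP [h|/eqP->]; last exact: nle_refl.
by move: (nle_total a b); rewrite (negbTE h).
Qed.

Lemma lub_exists (S : ninf -> Prop) : exists s, is_lub S s.
Proof.
case: (classic (S None \/ forall M, exists k, S (Some k) /\ M <= k)) => [H|H].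
  exists None; split=> [x _|t Ht]; first exact: nle_None.
  case: t Ht => // m Ht; case: H => [/Ht //|/(_ m.+1) [k [Sk hk]]].
  by move: (Ht _ Sk) => /=; rewrite leqNgt hk.
have nN : ~ S None by move=> h; apply: H; left.
have [M HM] : exists M, forall k, S (Some k) -> k < M.
  apply: NNPP => hM; apply: H; right => M; apply: NNPP => hk; apply: hM.
  exists M => k Sk; rewrite ltnNge; apply/negP => hMk; apply: hk; by exists k.
elim: M HM => [|M IH] HM.
  exists (Some 0); split => [[k|] Sk|t _]; [by move: (HM _ Sk)|by []|exact: nle_0].
case: (classic (S (Some M))) => SM.
  exists (Some M); split => [[k|] Sk|t Ht]; [by move: (HM _ Sk)|by []|exact: Ht].
apply: IH => k Sk; move: (HM _ Sk); rewrite ltnS leq_eqVlt => /orP [/eqP e|//].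
by subst.
Qed.

Lemma glb_exists (S : ninf -> Prop) : exists s, is_glb S s.
Proof.
case: (classic (exists n, S (Some n))) => [[n Sn]|H]; last first.
  exists None; split => [[k|] Sk|t _]; [by case: H; exists k|by []|exact: nle_None].
elim: n {-2}n (leqnn n) Sn => [|N IH] n hn Sn.
  move: hn; rewrite leqn0 => /eqP e; subst n.
  exists (Some 0); split => [x _|t Ht]; [exact: nle_0|exact: Ht].
case: (classic (exists j, j < n /\ S (Some j))) => [[j [hj Sj]]|Hj].
  apply: (IH j) => //; rewrite -ltnS; exact: leq_trans hj hn.
exists (Some n); split => [[k|] Sk|t Ht]; [|by []|exact: Ht].
rewrite /= leqNgt; apply/negP => hk; apply: Hj; by exists k.
Qed.

Lemma sup_spec S : is_lub S (ninf_sup S).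
Proof. rewrite /ninf_sup; apply: epsilon_spec; exact: lub_exists. Qed.
Lemma inf_spec S : is_glb S (ninf_inf S).
Proof. rewrite /ninf_inf; apply: epsilon_spec; exact: glb_exists. Qed.

Lemma sup_ub (S : ninf -> Prop) x : S x -> ninf_le x (ninf_sup S).
Proof. exact: (sup_spec S).1. Qed.
Lemma sup_least (S : ninf -> Prop) t : (forall x, S x -> ninf_le x t) -> ninf_le (ninf_sup S) t.
Proof. exact: (sup_spec S).2. Qed.
Lemma inf_lb (S : ninf -> Prop) x : S x -> ninf_le (ninf_inf S) x.
Proof. exact: (inf_spec S).1. Qed.
Lemma inf_greatest (S : ninf -> Prop) t : (forall x, S x -> ninf_le t x) -> ninf_le t (ninf_inf S).
Proof. exact: (inf_spec S).2. Qed.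

Lemma le_succ_inf (S : ninf -> Prop) x :
  (forall y, S y -> ninf_le x (ninf_succ y)) -> ninf_le x (ninf_succ (ninf_inf S)).
Proof.
move=> H; case: x H => [[|k]|] H; first by case: (ninf_inf S).
  have : ninf_le (Some k) (ninf_inf S).
    apply: inf_greatest => y Sy; move: (H _ Sy); clear Sy; by case: y.
  by case: (ninf_inf S).
have : ninf_le None (ninf_inf S).
  apply: inf_greatest => y Sy; move: (H _ Sy); clear Sy; by case: y.
by case: (ninf_inf S).
Qed.

Lemma succ_inf_le (S : ninf -> Prop) y : S y -> ninf_le (ninf_succ (ninf_inf S)) (ninf_succ y).
Proof. move=> Sy; move: (inf_lb Sy); case: (ninf_inf S); clear Sy; by case: y. Qed.

Section Rcost.
Variables (T : Type) (tg : T -> bool).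

Lemma rcost_Some (rho : nat -> T) k :
  tg (rho k) -> (forall j, j < k -> ~~ tg (rho j)) -> rcost tg rho = Some k.
Proof.
move=> hk hj; apply: nle_anti.
  apply: inf_lb; by exists k.
apply: inf_greatest => x [j [tj ->]] /=; rewrite leqNgt; apply/negP => /hj.
by rewrite tj.
Qed.

Lemma rcost_None (rho : nat -> T) : (forall j, ~~ tg (rho j)) -> rcost tg rho = None.
Proof.
move=> h; apply: nle_anti; first exact: nle_None.
apply: inf_greatest => x [j [tj _]]; by move: (h j); rewrite tj.
Qed.

Lemma rcost_le (rho : nat -> T) k : tg (rho k) -> ninf_le (rcost tg rho) (Some k).
Proof. move=> h; apply: inf_lb; by exists k. Qed.

Lemma rcost_ge (rho : nat -> T) k : (forall j, j < k -> ~~ tg (rho j)) ->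
  ninf_le (Some k) (rcost tg rho).
Proof.
move=> h; apply: inf_greatest => x [j [tj ->]] /=; rewrite leqNgt; apply/negP => /h.
by rewrite tj.
Qed.

Lemma rcost_SomeP (rho : nat -> T) k : rcost tg rho = Some k ->
  tg (rho k) /\ (forall j, j < k -> ~~ tg (rho j)).
Proof.
move=> e.
case: (classic (exists j, tg (rho j))) => [[j tj]|H]; last first.
  by rewrite rcost_None in e => // j; apply/negP => tj; apply: H; exists j.
have [m [tm hm]] : exists m, tg (rho m) /\ forall j, j < m -> ~~ tg (rho j).
  elim: j {-2}j (leqnn j) tj => [|N IH] j hj tj.
    move: hj; rewrite leqn0 => /eqP ej; subst j; by exists 0.
  case: (classic (exists i, i < j /\ tg (rho i))) => [[i [hi ti]]|Hi].
    apply: (IH i) => //; rewrite -ltnS; exact: leq_trans hi hj.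
  exists j; split => // i hi; apply/negP => ti; apply: Hi; by exists i.
by rewrite (rcost_Some tm hm) in e; case: e => <-.
Qed.

Lemma rcost_NoneP (rho : nat -> T) : rcost tg rho = None -> forall j, ~~ tg (rho j).
Proof. move=> e j; apply/negP => tj; move: (rcost_le tj); by rewrite e. Qed.

Lemma rcost_ext (r1 r2 : nat -> T) : (forall n, r1 n = r2 n) -> rcost tg r1 = rcost tg r2.
Proof. by move=> h; rewrite (functional_extensionality _ _ h). Qed.

Lemma rcost_le_agree (r1 r2 : nat -> T) k :
  (forall j, j <= k -> r1 j = r2 j) -> ninf_le (rcost tg r1) (Some k) ->
  rcost tg r1 = rcost tg r2.
Proof.
move=> ag; case e: (rcost tg r1) => [m|] //= hm.
move: (rcost_SomeP e) => [tm hj]; symmetry; apply: rcost_Some.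
  by rewrite -ag.
move=> j hjm; rewrite -ag; [exact: hj| exact: leq_trans (ltnW hjm) hm].
Qed.

End Rcost.

Section Game.
Variables (Pi V : finType) (owner : V -> Pi) (E : rel V) (F : Pi -> {set V}).
Local Notation VX := (VX Pi V).
Local Notation EX := (EX E F).
Local Notation own := (ownerX owner).
Local Notation profile := (profile Pi V).
Local Notation strategy := (strategy Pi V).
Local Notation outcome := (outcome owner).
Local Notation step P := (out_step owner P).
Local Notation valid := (valid_profile owner E F).
Local Notation is_hist := (is_history E F).

Lemma out0 (P : profile) h u : outcome P h u 0 = u.
Proof. by []. Qed.

Lemma outS (P : profile) h u n :
  outcome P h u n.+1 = outcome P (rcons h u) (P (own u) h u) n.
Proof. by rewrite /outcome iterSr. Qed.

Lemma out_state (P : profile) h u n :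
  iter n (step P) (u, h) = (outcome P h u n, h ++ mkseq (outcome P h u) n).
Proof.
elim: n => [|n IH]; first by rewrite cats0.
by rewrite iterS IH /out_step /= /outcome iterS IH /= mkseqS rcons_cat.
Qed.

Lemma outSn (P : profile) h u n :
  outcome P h u n.+1 = P (own (outcome P h u n)) (h ++ mkseq (outcome P h u) n) (outcome P h u n).
Proof. by rewrite {1}/outcome iterS out_state. Qed.

Lemma out_shift (P : profile) h u n k :
  outcome P h u (k + n) = outcome P (h ++ mkseq (outcome P h u) n) (outcome P h u n) k.
Proof. by rewrite {1}/outcome iterD out_state. Qed.

Lemma out_play (P : profile) h u : valid P -> is_play EX (outcome P h u).
Proof. move=> vP n; rewrite outSn; exact: vP. Qed.

Lemma out_agree (P Q : profile) h u n :
  (forall j, j < n -> let v := outcome P h u j in let g := h ++ mkseq (outcome P h u) j in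
     P (own v) g v = Q (own v) g v) ->
  forall j, j <= n -> outcome P h u j = outcome Q h u j.
Proof.
move=> ag; elim: n ag => [|n IH] ag j hj.
  by move: hj; rewrite leqn0 => /eqP ->.
have IH' : forall j, j <= n -> outcome P h u j = outcome Q h u j.
  by apply: IH => i hi; apply: ag; rewrite ltnW.
rewrite leq_eqVlt in hj; case/orP: hj => [/eqP ->|hj]; last exact: IH'.
have mk : mkseq (outcome P h u) n = mkseq (outcome Q h u) n.
  rewrite /mkseq; apply/eq_in_map => i; rewrite mem_iota add0n => /andP [_ hi].
  by apply: IH'; rewrite ltnW.
rewrite !outSn -mk -(IH' n (leqnn n)); exact: ag.
Qed.

Lemma out_agree_size (P Q : profile) h u :
  (forall g v, size h <= size g -> P (own v) g v = Q (own v) g v) ->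
  forall j, outcome P h u j = outcome Q h u j.
Proof.
move=> ag j; apply: (@out_agree P Q h u j) => // i _.
by apply: ag; rewrite size_cat leq_addr.
Qed.

Lemma concat_lt (h : seq VX) rho k : k < size h -> concat_play h rho k = nth (rho 0) h k.
Proof. by rewrite /concat_play => ->. Qed.
Lemma concat_ge (h : seq VX) rho k : size h <= k -> concat_play h rho k = rho (k - size h).
Proof. by rewrite /concat_play ltnNge => ->. Qed.

Lemma concat_shift (h : seq VX) rho :
  forall k, concat_play h rho k = concat_play (rcons h (rho 0)) (fun n => rho n.+1) k.
Proof.
move=> k; rewrite /concat_play size_rcons.
case: (ltngtP k (size h)) => hk.
- by rewrite ltnS ltnW // nth_rcons hk (set_nth_default (rho 0)).
- by rewrite ltnNge hk /= subnSK.
- by rewrite hk ltnSn nth_rcons ltnn eqxx subnn.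
Qed.

Lemma concat_cost_nohit (tg : VX -> bool) (h : seq VX) rho :
  (forall a, a \in h -> ~~ tg a) ->
  rcost tg (concat_play h rho) = omap (addn (size h)) (rcost tg rho).
Proof.
move=> nh; case e: (rcost tg rho) => [k|] /=.
  move: (rcost_SomeP e) => [tk hj]; apply: rcost_Some.
    by rewrite concat_ge ?leq_addr // addKn.
  move=> j hj'; case: (ltnP j (size h)) => hjh.
    by rewrite concat_lt // nh // mem_nth.
  rewrite concat_ge //; apply: hj; by rewrite ltn_subLR.
apply: rcost_None => j; case: (ltnP j (size h)) => hjh.
  by rewrite concat_lt // nh // mem_nth.
by rewrite concat_ge //; apply: (rcost_NoneP e).
Qed.

Lemma concat_cost_hit (tg : VX -> bool) (h : seq VX) r1 r2 :
  (exists2 a, a \in h & tg a) ->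
  rcost tg (concat_play h r1) = rcost tg (concat_play h r2).
Proof.
case=> a ah ta; apply: (@rcost_le_agree _ _ _ _ (index a h)).
  move=> j hj; have hjh : j < size h by apply: leq_ltn_trans hj _; rewrite index_mem.
  by rewrite !concat_lt // (set_nth_default (r2 0)).
apply: rcost_le; by rewrite concat_lt ?index_mem // nth_index.
Qed.

Lemma hist_rcons x0 (h : seq VX) a u :
  is_hist x0 (rcons h a) u <-> is_hist x0 h a /\ EX a u.
Proof.
case: h => [|b t] /=; first by split=> [[-> /andP [-> _]]|[-> ->]].
by rewrite rcons_path last_rcons; split=> [[-> /andP [-> ->]]|[[-> ->] ->]].
Qed.

Lemma EX_mono u u' i : EX u u' -> i \in u.2 -> i \in u'.2.
Proof. by move=> /andP [_ /eqP ->] hi; rewrite in_setU hi. Qed.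

Lemma hist_mono x0 (h : seq VX) u i : is_hist x0 h u -> forall a, a \in h -> i \in a.2 -> i \in u.2.
Proof.
elim/last_ind: h u => [|h b IH] u //; move=> /hist_rcons [hh e] a.
rewrite mem_rcons in_cons => /orP [/eqP ->|ah] ia; first exact: EX_mono e ia.
exact: EX_mono e (IH _ hh a ah ia).
Qed.

Lemma hist_reach x0 (h : seq VX) u : is_hist x0 h u -> connect EX x0 u.
Proof.
elim/last_ind: h u => [|h b IH] u /=; first by move=> ->; exact: connect0.
move=> /hist_rcons [hh e]; apply: connect_trans (IH _ hh) _; exact: connect1.
Qed.

Lemma reach_hist x0 u : connect EX x0 u -> exists h, is_hist x0 h u.
Proof.
move=> /connectP [p pp ->]; elim/last_ind: p pp => [|p b IH] pp; first by exists [::].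
move: pp; rewrite rcons_path => /andP [pp e]; case: (IH pp) => h hh.
exists (rcons h (last x0 p)); rewrite last_rcons; by apply/hist_rcons.
Qed.

Lemma out_hist x0 (P : profile) h u n : valid P -> is_hist x0 h u ->
  is_hist x0 (h ++ mkseq (outcome P h u) n) (outcome P h u n).
Proof.
move=> vP hh; elim: n => [|n IH]; first by rewrite cats0.
rewrite mkseqS -rcons_cat; apply/hist_rcons; split => //; exact: out_play.
Qed.

End Game.

Section Forward.
Variables (Pi V : finType) (owner : V -> Pi) (E : rel V) (F : Pi -> {set V}).
Local Notation VX := (VX Pi V).
Local Notation EX := (EX E F).
Local Notation own := (ownerX owner).
Local Notation profile := (profile Pi V).
Local Notation outcome := (outcome owner).
Local Notation valid := (valid_profile owner E F).
Local Notation is_hist := (is_history E F).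
Local Notation Lam := (Lambda owner E F).

Variables (x0 : VX) (sigma : profile).
Hypothesis hSPE : SPE owner E F x0 sigma.

Definition Pgood (lam : labeling Pi V) :=
  forall h u, is_hist x0 h u -> ninf_le (CostX (own u) (outcome sigma h u)) (lam u).

Lemma Pgood_Lam lam : Pgood lam -> forall h u, is_hist x0 h u -> Lam lam u (outcome sigma h u).
Proof.
move=> P h u hh; split; first exact: out_play hSPE.1.
split => // n.
have -> : CostX (own (outcome sigma h u n)) (fun k => outcome sigma h u (n + k)) =
          CostX (own (outcome sigma h u n)) (outcome sigma (h ++ mkseq (outcome sigma h u) n) (outcome sigma h u n)).
  by apply: rcost_ext => k; rewrite addnC out_shift.
apply: P; exact: out_hist hSPE.1 hh.
Qed.

Lemma Pgood_lam0 : Pgood (lam0 owner).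
Proof.
move=> h u hh; rewrite /lam0; case: ifP => hi; last exact: nle_None.
by apply: rcost_le; rewrite out0.
Qed.

Lemma omap_add_le K a b : ninf_le (omap (addn K) a) (omap (addn K.+1) b) -> ninf_le a (ninf_succ b).
Proof. by case: a; case: b => //= x y; rewrite addSnnS leq_add2l. Qed.

Lemma Pgood_update (J : seq {set Pi}) lam n : Pgood lam -> Pgood (update owner E F J lam n).
Proof.
move=> P h u hh; rewrite /update; case: ifP => _; last exact: P.
case: ifP => hi; first by apply: rcost_le; rewrite out0.
apply: le_succ_inf => y [u' [e ->]].
set i := own u in hi *.
pose out' := outcome sigma (rcons h u) u'.
have hh' : is_hist x0 (rcons h u) u' by apply/hist_rcons.
have L' : Lam lam u' out' by apply: Pgood_Lam.
apply: (@nle_trans (ninf_succ (CostX i out'))); last first.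
  have := sup_ub (S := fun d => exists rho, Lam lam u' rho /\ d = CostX i rho) (ex_intro _ out' (conj L' erefl)).
  by case: (CostX i out'); case: (ninf_sup _).
pose tau : strategy Pi V := fun g v => if (g == h) && (v == u) then u' else sigma i g v.
have vtau : valid_strategy owner E F i tau.
  move=> g v ov; rewrite /tau; case: ifP => [/andP [_ /eqP ->] //|_].
  rewrite -ov; exact: hSPE.1.
have NE := hSPE.2 h u hh i tau vtau.
move/nlt_le: NE.
have nh : forall a, a \in h -> ~~ targetX i a.
  move=> a ah; apply/negP => ia; move: (hist_mono hh ah ia); by rewrite hi.
rewrite /CostX concat_cost_nohit //.
have -> : rcost (targetX i) (concat_play h (outcome (deviate sigma i tau) h u)) =
          rcost (targetX i) (concat_play (rcons h u) out').
  apply: rcost_ext => k; rewrite concat_shift out0.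
  have -> : (fun n0 => outcome (deviate sigma i tau) h u n0.+1) = out'.
    apply: functional_extensionality => m; rewrite outS /deviate.
    rewrite eqxx /tau !eqxx /=.
    apply: out_agree_size => g v hs; case: eqP => [->|//].
    case: eqP => [eg|]; last by rewrite andFb.
    by move: hs; rewrite eg size_rcons ltnn.
  by [].
rewrite concat_cost_nohit; last first.
  move=> a; rewrite mem_rcons in_cons => /orP [/eqP ->|]; first by rewrite /targetX hi.
  exact: nh.
by rewrite size_rcons; apply: omap_add_le.
Qed.

Lemma Pgood_lam_seq J k : Pgood (lam_seq owner E F J k).1.
Proof.
elim: k => [|k IH] /=; first exact: Pgood_lam0.
move: IH; case: (lam_seq owner E F J k) => l n /= IH; exact: Pgood_update.
Qed.

End Forward.

Definition infin (D : nat -> Prop) := forall N, exists d, N <= d /\ D d.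

Lemma pigeon (T : finType) (D : nat -> Prop) (g : nat -> T) :
  infin D -> exists x, infin (fun d => D d /\ g d = x).
Proof.
move=> iD; apply: NNPP => H.
have Hx : forall x, exists N, forall d, N <= d -> ~ (D d /\ g d = x).
  move=> x; apply: NNPP => hx; apply: H; exists x => N; apply: NNPP => hN; apply: hx.
  exists N => d hd hD; apply: hN; by exists d.
pose Nf x := epsilon (inhabits 0) (fun N => forall d, N <= d -> ~ (D d /\ g d = x)).
have HN : forall x d, Nf x <= d -> ~ (D d /\ g d = x).
  move=> x; exact: (epsilon_spec (inhabits 0) _ (Hx x)).
case: (iD (\max_x Nf x)) => d [hd Dd].
apply: (HN (g d) d) => //; apply: leq_trans hd; exact: leq_bigmax.
Qed.

Section Limit.
Variables (K : countType) (T : finType) (f : nat -> K -> T) (t0 : T).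

Definition xch (D : nat -> Prop) (k : K) : T :=
  epsilon (inhabits t0) (fun x => infin (fun d => D d /\ f d k = x)).

Fixpoint Dm (m : nat) : nat -> Prop :=
  match m with
  | 0 => fun _ => True
  | m'.+1 => match unpickle m' with
             | Some k => fun d => Dm m' d /\ f d k = xch (Dm m') k
             | None => Dm m'
             end
  end.

Lemma Dm_inf m : infin (Dm m).
Proof.
elim: m => [|m IH] /=; first by move=> N; exists N.
case: (unpickle m) => [k|] //.
apply: (epsilon_spec (inhabits t0) (fun x => infin (fun d => Dm m d /\ f d k = x))).
exact: pigeon.
Qed.

Lemma Dm_mono m j d : Dm (j + m) d -> Dm m d.
Proof.
elim: j => [|j IH] //=; case: (unpickle (j + m)) => [k|] //.
by move=> [/IH].
Qed.

Definition flim (k : K) : T := xch (Dm (pickle k)) k.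

Lemma flim_spec (ks : seq K) N : exists d, N <= d /\ forall k, k \in ks -> f d k = flim k.
Proof.
case: (Dm_inf (\max_(k <- ks) (pickle k)).+1 N) => d [hd Dd].
exists d; split => // k kin.
have hk : pickle k < (\max_(k <- ks) (pickle k)).+1.
  rewrite ltnS; exact: (leq_bigmax_seq k kin isT).
have := Dm_mono (j := (\max_(k <- ks) (pickle k)).+1 - (pickle k).+1) (m := (pickle k).+1) (d := d).
rewrite subnK // => /(_ Dd) /=; by rewrite pickleK => -[].
Qed.

End Limit.

Section Exist.
Variables (Pi V : finType) (owner : V -> Pi) (E : rel V) (F : Pi -> {set V}).
Hypothesis hE : forall v : V, exists v' : V, E v v'.
Local Notation VX := (VX Pi V).
Local Notation EX := (EX E F).
Local Notation own := (ownerX owner).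
Local Notation profile := (profile Pi V).
Local Notation outcome := (outcome owner).
Local Notation valid := (valid_profile owner E F).
Local Notation is_hist := (is_history E F).

Lemma EX_succ (u : VX) : exists u', EX u u'.
Proof.
case: (hE u.1) => v' e; exists (v', u.2 :|: [set i | v' \in F i]).
by rewrite /Defs.EX /= e eqxx.
Qed.

Definition dflt (u : VX) : VX := epsilon (inhabits u) (fun u' => EX u u').
Lemma dfltP u : EX u (dflt u).
Proof. exact: (epsilon_spec (inhabits u) (fun u' => EX u u') (EX_succ u)). Qed.

Definition tc (d : nat) (i : Pi) (rho : nat -> VX) : nat :=
  match CostX i rho with Some k => if k < d then k else d | None => d end.

Lemma tc_agree d i (r1 r2 : nat -> VX) : (forall j, j < d -> r1 j = r2 j) -> tc d i r1 = tc d i r2.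
Proof.
move=> ag.
have H : forall (a b : nat -> VX), (forall j, j < d -> a j = b j) ->
    forall k, CostX i a = Some k -> k < d -> CostX i a = CostX i b.
  move=> a b ab k e hk; apply: (@rcost_le_agree _ _ _ _ k).
    move=> j hj; apply: ab; exact: leq_ltn_trans hj hk.
  rewrite /CostX in e; by rewrite e /= leqnn.
rewrite /tc.
case e1: (CostX i r1) => [k1|].
  case: (ltnP k1 d) => h1.
    by rewrite -(H _ _ ag _ e1 h1) e1 h1.
  case e2: (CostX i r2) => [k2|] //.
  case: (ltnP k2 d) => h2 //.
  have ag' : forall j, j < d -> r2 j = r1 j by move=> j hj; rewrite ag.
  by move: (H _ _ ag' _ e2 h2); rewrite e1 e2 => -[ek]; move: h1 h2; rewrite ek; case: ltnP.
case e2: (CostX i r2) => [k2|] //.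
case: (ltnP k2 d) => h2 //.
have ag' : forall j, j < d -> r2 j = r1 j by move=> j hj; rewrite ag.
by move: (H _ _ ag' _ e2 h2); rewrite e1 e2.
Qed.

Lemma concat_agree (h : seq VX) r1 r2 n : (forall j, j <= n -> r1 j = r2 j) ->
  forall j, j <= n -> concat_play h r1 j = concat_play h r2 j.
Proof.
move=> ag j hj; rewrite /concat_play; case: ifP => _.
  by rewrite (ag 0 (leq0n n)).
apply: ag; exact: leq_trans (leq_subr _ _) hj.
Qed.

Fixpoint G (d n : nat) : seq VX -> VX -> VX :=
  match n with
  | 0 => fun g u => dflt u
  | n'.+1 => fun g u =>
     if size g + n'.+1 == d then
       [arg min_(s < dflt u | EX u s)
          tc d (own u) (concat_play (rcons g u) (outcome (fun _ => G d n') (rcons g u) s))]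
     else G d n' g u
  end.

Lemma G_valid d n g u : EX u (G d n g u).
Proof.
elim: n g u => [|n IH] g u /=; first exact: dfltP.
case: ifP => _; last exact: IH.
by case: arg_minnP => //; exact: dfltP.
Qed.

Lemma G_stable d n m g u : d <= size g + n -> G d (m + n) g u = G d n g u.
Proof.
move=> hd; elim: m => [|m IH] //=.
rewrite ifN ?IH //; apply/negP => /eqP e; move: hd; rewrite -e; lia.
Qed.

Definition sd (d : nat) : profile := fun _ => G d d.

Lemma sd_valid d : valid (sd d).
Proof. move=> i g u _; exact: G_valid. Qed.

Lemma sd_G d r g u : r <= d -> d <= size g + r -> G d d g u = G d r g u.
Proof.
move=> hr hd; have -> : G d d g u = G d (d - r + r) g u by rewrite subnK.
exact: G_stable.
Qed.

Lemma sd_choice d r g u : size g + r.+1 = d ->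
  sd d (own u) g u = [arg min_(s < dflt u | EX u s)
          tc d (own u) (concat_play (rcons g u) (outcome (sd d) (rcons g u) s))].
Proof.
move=> e; rewrite /sd (@sd_G d r.+1 g u); [|lia|lia]; rewrite /= e eqxx.
have ag : outcome (fun _ => G d r) (rcons g u) = outcome (sd d) (rcons g u).
  apply: functional_extensionality => s; apply: functional_extensionality => j.
  apply: out_agree_size => g' v hs; rewrite /sd.
  symmetry; apply: sd_G; first by lia.
  by move: hs; rewrite size_rcons; lia.
by rewrite ag.
Qed.

End Exist.

Section Opt.
Variables (Pi V : finType) (owner : V -> Pi) (E : rel V) (F : Pi -> {set V}).
Hypothesis hE : forall v : V, exists v' : V, E v v'.
Local Notation VX := (VX Pi V).
Local Notation EX := (EX E F).
Local Notation own := (ownerX owner).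
Local Notation profile := (profile Pi V).
Local Notation outcome := (outcome owner).
Local Notation valid := (valid_profile owner E F).
Local Notation sd := (sd owner E F).

Lemma concat_out (P : profile) g u :
  concat_play g (outcome P g u) = concat_play (rcons g u) (outcome P (rcons g u) (P (own u) g u)).
Proof.
apply: functional_extensionality => k; rewrite concat_shift out0.
have -> : (fun n => outcome P g u n.+1) = outcome P (rcons g u) (P (own u) g u).
  apply: functional_extensionality => n; exact: outS.
by [].
Qed.

Lemma sd_opt d r : forall (g : seq VX) u i tau, d - size g <= r ->
  valid_strategy owner E F i tau ->
  tc d i (concat_play g (outcome (sd d) g u)) <=
  tc d i (concat_play g (outcome (deviate (sd d) i tau) g u)).
Proof.
elim: r => [|r IH] g u i tau hr vt.
  rewrite (@tc_agree _ _ d i _ (concat_play g (outcome (deviate (sd d) i tau) g u))) //.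
  move=> j hj; have hjg : j < size g by lia.
  by rewrite !concat_lt // (set_nth_default (outcome (deviate (sd d) i tau) g u 0)).
case: (leqP (d - size g) r) => hr'; first exact: IH.
have e : size g + r.+1 = d by lia.
rewrite (concat_out (sd d)) (concat_out (deviate (sd d) i tau)).
have eq1 := sd_choice owner E F u e.
pose M := fun s => tc d (own u) (concat_play (rcons g u) (outcome (sd d) (rcons g u) s)).
have Hs : forall s, EX u s -> M (sd d (own u) g u) <= M s.
  move=> s es; rewrite eq1; case: arg_minnP => [|s0 _ Hm]; first exact: dfltP.
  exact: Hm.
have hr2 : d - size (rcons g u) <= r by rewrite size_rcons; lia.
case: (@eqP _ (own u) i) => [ei|ne]; last first.
  have -> : deviate (sd d) i tau (own u) g u = sd d (own u) g u by rewrite /deviate (introF eqP ne).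
  exact: IH.
have -> : deviate (sd d) i tau (own u) g u = tau g u by rewrite /deviate ei eqxx.
apply: leq_trans (IH _ _ _ _ hr2 vt).
have es : EX u (tau g u) by apply: vt.
move: (Hs _ es); by rewrite /M ei.
Qed.

End Opt.

Section SPEex.
Variables (Pi V : finType) (owner : V -> Pi) (E : rel V) (F : Pi -> {set V}).
Local Notation VX := (VX Pi V).
Local Notation EX := (EX E F).
Local Notation own := (ownerX owner).
Local Notation profile := (profile Pi V).
Local Notation outcome := (outcome owner).
Local Notation valid := (valid_profile owner E F).
Local Notation sd := (sd owner E F).
Variable (x0 : VX).
Hypothesis hE : forall v : V, exists v' : V, E v v'.

Definition fG (d : nat) (k : seq VX * VX) : VX := G owner E F d d k.1 k.2.
Definition slim : profile := fun _ g u => flim fG x0 (g, u).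

Lemma slim_valid : valid slim.
Proof.
move=> i g u _; case: (flim_spec fG x0 [:: (g, u)] 0) => d [_ H].
have := H (g, u) (mem_head _ _); rewrite /fG /= => e.
have := @G_valid _ _ owner E F hE d d g u; rewrite e; by [].
Qed.

Lemma slim_SPE : SPE owner E F x0 slim.
Proof.
split; first exact: slim_valid.
move=> h u _ i tau vt; apply/negP => lt.
set D := deviate slim i tau.
move: lt; case ec: (CostX i (concat_play h (outcome D h u))) => [c'|]; last first.
  by rewrite /ninf_lt; case: (CostX i _).
move=> lt.
pose L := c'.+1.
pose ks := [seq (h ++ mkseq (outcome slim h u) j, outcome slim h u j) | j <- iota 0 L] ++
           [seq (h ++ mkseq (outcome D h u) j, outcome D h u j) | j <- iota 0 L].
case: (flim_spec fG x0 ks L) => d [hd Hd].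
have ag1 : forall j, j <= L -> outcome slim h u j = outcome (sd d) h u j.
  apply: out_agree => j hj /=; rewrite /slim /sd -Hd //.
  rewrite mem_cat; apply/orP; left; apply/mapP; exists j => //; by rewrite mem_iota.
have ag2 : forall j, j <= L -> outcome D h u j = outcome (deviate (sd d) i tau) h u j.
  apply: out_agree => j hj /=; rewrite /D /deviate; case: eqP => _ //.
  rewrite /slim /sd -Hd //.
  rewrite mem_cat; apply/orP; right; apply/mapP; exists j => //; by rewrite mem_iota.
have opt := @sd_opt _ _ owner E F hE d d h u i tau (leq_subr _ _) vt.
have e2 : CostX i (concat_play h (outcome (deviate (sd d) i tau) h u)) = Some c'.
  rewrite -ec; symmetry; apply: (@rcost_le_agree _ _ _ _ c').
    apply: concat_agree => j hj; apply: ag2; exact: leq_trans hj (leqnSn _).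
  by rewrite /CostX in ec; rewrite ec /= leqnn.
have hcd : c' < d by exact: hd.
move: opt; rewrite {2}/tc e2 hcd.
rewrite /tc; case e1: (CostX i (concat_play h (outcome (sd d) h u))) => [k|]; last first.
  by rewrite leqNgt hcd.
case: ifP => hk; last by rewrite leqNgt hcd.
move=> hkc.
have e3 : CostX i (concat_play h (outcome slim h u)) = Some k.
  rewrite -e1; symmetry; apply: (@rcost_le_agree _ _ _ _ k).
    apply: concat_agree => j hj; symmetry; apply: ag1.
    exact: leq_trans hj (leq_trans hkc (leqnSn _)).
  by rewrite /CostX in e1; rewrite e1 /= leqnn.
move: lt; rewrite e3 /ninf_lt /=; case/andP => h1 h2.
have ekc : c' = k by apply/anti_leq; rewrite h1 hkc.
by rewrite ekc eqxx in h2.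
Qed.

End SPEex.

Section Fix.
Variables (Pi V : finType) (owner : V -> Pi) (E : rel V) (F : Pi -> {set V}).
Local Notation VX := (VX Pi V).
Local Notation EX := (EX E F).
Local Notation own := (ownerX owner).
Local Notation lseq := (lam_seq owner E F).
Local Notation Lam := (Lambda owner E F).

Lemma lseq_S J k : (lseq J k.+1).1 = update owner E F J (lseq J k).1 (lseq J k).2.
Proof. by rewrite /=; case: (lseq J k). Qed.

Lemma lam_fix (J : seq {set Pi}) kstar :
  (forall m u, (lseq J (kstar + m)).1 u = (lseq J kstar).1 u) ->
  update owner E F J (lseq J kstar).1 0 = (lseq J kstar).1.
Proof.
move=> hk.
have hkf : forall m, (lseq J (kstar + m)).1 = (lseq J kstar).1.
  move=> m; apply: functional_extensionality; exact: hk.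
have hn : forall m, (lseq J (kstar + m)).2 = (lseq J kstar).2 - m.
  elim=> [|m IH]; first by rewrite addn0 subn0.
  rewrite addnS /=.
  move: (hkf m.+1) (hkf m); rewrite addnS /=.
  case: (lseq J (kstar + m)) IH => l n /= IH e1 e2.
  have -> : [forall u, update owner E F J l n u == l u].
    by apply/forallP => u; rewrite e1 e2.
  rewrite IH /=; case: ifP => h; first by rewrite subnS.
  by move: h; rewrite subn_gt0 => /negbT; rewrite -leqNgt => h; rewrite subnS; lia.
set m := (lseq J kstar).2.
have H1 := hkf m; have H2 := hn m; have H3 := hkf m.+1.
rewrite subnn in H2; rewrite addnS lseq_S H1 H2 in H3; exact: H3.
Qed.

End Fix.

Section Konig.
Variables (Pi V : finType) (owner : V -> Pi) (E : rel V) (F : Pi -> {set V}).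
Local Notation VX := (VX Pi V).
Local Notation EX := (EX E F).
Local Notation own := (ownerX owner).
Local Notation Lam := (Lambda owner E F).
Variables (lam : labeling Pi V) (w : VX) (i : Pi).

Definition good (p : seq VX) := forall m, exists pi, Lam lam w pi /\
  ninf_le (Some m) (CostX i pi) /\ forall j, j < size p -> pi j = nth w p j.

Lemma good_ext p : good p -> exists x, good (rcons p x).
Proof.
move=> gp.
pose W m := epsilon (inhabits (fun _ => w)) (fun pi => Lam lam w pi /\
  ninf_le (Some m) (CostX i pi) /\ forall j, j < size p -> pi j = nth w p j).
have WS : forall m, Lam lam w (W m) /\ ninf_le (Some m) (CostX i (W m)) /\
    forall j, j < size p -> W m j = nth w p j.
  move=> m; exact: (epsilon_spec (inhabits (fun _ => w)) _ (gp m)).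
case: (@pigeon _ (fun _ => True) (fun m => W m (size p))) => [N|x Hx].
  by exists N.
exists x => m; case: (Hx m) => m' [hm [_ ex]].
exists (W m'); case: (WS m') => [L [C A]]; split => //; split.
  by apply: nle_trans C.
move=> j; rewrite size_rcons ltnS leq_eqVlt => /orP [/eqP ->|hj].
  by rewrite nth_rcons ltnn eqxx.
by rewrite nth_rcons hj A.
Qed.

Definition nxt (p : seq VX) : VX := epsilon (inhabits w) (fun x => good (rcons p x)).

Fixpoint pref (n : nat) : seq VX :=
  match n with 0 => [:: w] | n'.+1 => rcons (pref n') (nxt (pref n')) end.

Definition klim (n : nat) : VX := nth w (pref n) n.

Lemma size_pref n : size (pref n) = n.+1.
Proof. by elim: n => //= n IH; rewrite size_rcons IH. Qed.

Lemma pref_nth n j : j <= n -> nth w (pref n) j = klim j.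
Proof.
elim: n => [|n IH] hj; first by move: hj; rewrite leqn0 => /eqP ->.
rewrite leq_eqVlt in hj; case/orP: hj => [/eqP ->|hj]; first by [].
by rewrite /= nth_rcons size_pref hj IH.
Qed.

Hypothesis Hunb : forall m, exists pi, Lam lam w pi /\ ninf_le (Some m) (CostX i pi).

Lemma good_pref n : good (pref n).
Proof.
elim: n => [|n IH] /=.
  move=> m; case: (Hunb m) => pi [L C]; exists pi; split => //; split => // j.
  by rewrite ltnS leqn0 => /eqP ->; case: L => _ [-> _].
apply: (epsilon_spec (inhabits w) (fun x => good (rcons (pref n) x))).
exact: good_ext.
Qed.

Lemma klim_approx n m : exists pi, Lam lam w pi /\ ninf_le (Some m) (CostX i pi) /\
  forall j, j <= n -> pi j = klim j.
Proof.
case: (good_pref n m) => pi [L [C A]]; exists pi; split => //; split => // j hj.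
by rewrite A ?size_pref // pref_nth.
Qed.

Lemma klim_Lam : Lam lam w klim /\ CostX i klim = None.
Proof.
split; last first.
  apply: rcost_None => j; case: (klim_approx j j.+1) => pi [_ [C A]].
  rewrite -A //; apply/negP => t; move: (nle_trans C (rcost_le t)).
  by rewrite /= ltnn.
split.
  move=> n; case: (klim_approx n.+1 0) => pi [[P _] [_ A]].
  by rewrite -!A //; apply: P.
split.
  case: (klim_approx 0 0) => pi [[_ [P0 _]] [_ A]]; by rewrite -A.
move=> n; case e: (lam (klim n)) => [c|]; last exact: nle_None.
case: (klim_approx (n + c) 0) => pi [[_ [_ Cs]] [_ A]].
have := Cs n; rewrite A ?leq_addr // e => Cn.
have -> : CostX (own (klim n)) (fun k => klim (n + k)) =
          CostX (own (klim n)) (fun k => pi (n + k)).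
  symmetry; apply: (@rcost_le_agree _ _ _ _ c) => //.
  move=> j hj; rewrite A //; by rewrite leq_add2l.
by [].
Qed.

End Konig.

Section Max.
Variables (Pi V : finType) (owner : V -> Pi) (E : rel V) (F : Pi -> {set V}).
Local Notation VX := (VX Pi V).
Local Notation Lam := (Lambda owner E F).
Variables (lam : labeling Pi V) (w : VX) (i : Pi).

Lemma max_exists : (exists pi, Lam lam w pi) ->
  exists pi, Lam lam w pi /\ forall pi', Lam lam w pi' -> ninf_le (CostX i pi') (CostX i pi).
Proof.
move=> ne.
case: (classic (forall m, exists pi, Lam lam w pi /\ ninf_le (Some m) (CostX i pi))) => H.
  case: (klim_Lam H) => L C; eexists; split; first exact: L.
  move=> pi' _.
  rewrite C; exact: nle_None.
have [M HM] : exists M, forall pi, Lam lam w pi -> ~ ninf_le (Some M) (CostX i pi).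
  apply: NNPP => h; apply: H => m; apply: NNPP => h2; apply: h; exists m => pi L C.
  apply: h2; by exists pi.
elim: M HM => [|M IH] HM.
  case: ne => pi L; by case: (HM pi L); apply: nle_0.
case: (classic (exists pi, Lam lam w pi /\ ninf_le (Some M) (CostX i pi))) => [[pi [L C]]|h].
  exists pi; split => // pi' L'; have := HM pi' L'.
  case: (CostX i pi') => [k|] /= hk; last by case: hk.
  change (ninf_le (Some k) (CostX i pi)); refine (nle_trans _ C); rewrite /= leqNgt; apply/negP => hk'; apply: hk; exact: hk'.
apply: IH => pi L C; apply: h; by exists pi.
Qed.

End Max.

Section Back.
Variables (Pi V : finType) (owner : V -> Pi) (E : rel V) (F : Pi -> {set V}).
Hypothesis hE : forall v : V, exists v' : V, E v v'.
Local Notation VX := (VX Pi V).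
Local Notation EX := (EX E F).
Local Notation own := (ownerX owner).
Local Notation profile := (profile Pi V).
Local Notation outcome := (outcome owner).
Local Notation valid := (valid_profile owner E F).
Local Notation is_hist := (is_history E F).
Local Notation Lam := (Lambda owner E F).
Local Notation dflt := (dflt E F).

Variables (lam : labeling Pi V) (x0 : VX) (rho0 : nat -> VX).
Hypothesis hfix : forall u, connect EX x0 u -> own u \notin u.2 ->
  lam u = ninf_succ (ninf_inf (fun c => exists u', EX u u' /\
             c = ninf_sup (fun d => exists rho, Lam lam u' rho /\ d = CostX (own u) rho))).
Hypothesis hne : forall u, connect EX x0 u -> exists rho, Lam lam u rho.
Hypothesis hrho : Lam lam x0 rho0.

Definition pun (i : Pi) (w : VX) : nat -> VX :=
  epsilon (inhabits (fun _ => w)) (fun pi => Lam lam w pi /\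
     forall pi', Lam lam w pi' -> ninf_le (CostX i pi') (CostX i pi)).

Lemma punP i w : connect EX x0 w -> Lam lam w (pun i w) /\
     forall pi', Lam lam w pi' -> ninf_le (CostX i pi') (CostX i (pun i w)).
Proof.
move=> cw; rewrite /pun.
apply: (epsilon_spec (inhabits (fun _ => w)) (fun pi => Lam lam w pi /\
     forall pi', Lam lam w pi' -> ninf_le (CostX i pi') (CostX i pi))).
apply: max_exists; exact: hne.
Qed.

Definition stp (s : (nat -> VX) * nat * VX) (w : VX) : (nat -> VX) * nat * VX :=
  let: (R, t, u) := s in if R t.+1 == w then (R, t.+1, w) else (pun (own u) w, 0, w).

Definition refst (h : seq VX) (u : VX) : (nat -> VX) * nat * VX :=
  match h with [::] => (rho0, 0, u) | a :: t => foldl stp (rho0, 0, a) (rcons t u) end.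

Lemma refst_rcons h a u : refst (rcons h a) u = stp (refst h a) u.
Proof. case: h => [|b t] //=; by rewrite -cats1 foldl_cat. Qed.

Lemma refst_last h u : (refst h u).2 = u.
Proof.
elim/last_ind: h u => [|h a IH] u //; rewrite refst_rcons /stp.
by case: (refst h a) => [[R t] v]; case: ifP.
Qed.

Definition sigc : profile := fun _ g u =>
  let: (R, t, _) := refst g u in if (R t == u) && EX u (R t.+1) then R t.+1 else dflt u.

Lemma sigc_valid : valid sigc.
Proof.
move=> i g u _; rewrite /sigc; case: (refst g u) => [[R t] v].
case: ifP => [/andP [_ //]|_]; exact: dfltP.
Qed.

Definition Inv (h : seq VX) (u : VX) :=
  let: (R, t, _) := refst h u in R t = u /\ is_play EX R /\ consistent owner lam R.

Lemma Inv_hist h u : is_hist x0 h u -> Inv h u.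
Proof.
elim/last_ind: h u => [|h a IH] u.
  by move=> /= ->; case: hrho => P [e C]; rewrite /Inv /=.
move=> hh; have := hh; move/hist_rcons => [ha e].
have cu := hist_reach hh.
rewrite /Inv refst_rcons; move: (IH _ ha) (refst_last h a); rewrite /Inv.
case: (refst h a) => [[R t] v] [Rt [P C]] /= ev; subst v.
case: ifP => [/eqP -> //|_].
by case: (punP (own a) cu) => [[P' [e' C']] _].
Qed.

Lemma sigc_out h u R t : refst h u = (R, t, u) -> R t = u -> is_play EX R ->
  forall n, outcome sigc h u n = R (t + n) /\
    refst (h ++ mkseq (outcome sigc h u) n) (outcome sigc h u n) = (R, t + n, R (t + n)).
Proof.
move=> er Rt P; elim=> [|n [IH1 IH2]]; first by rewrite addn0 cats0 /= er Rt.
have o1 : outcome sigc h u n.+1 = R (t + n.+1).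
  rewrite outSn /sigc IH2 IH1 eqxx addnS P /=; by [].
split => //.
by rewrite mkseqS -rcons_cat refst_rcons IH2 /stp o1 addnS eqxx.
Qed.


Lemma omap_add_le2 K a b : ninf_le a (ninf_succ b) -> ninf_le (omap (addn K) a) (omap (addn K.+1) b).
Proof. by case: a; case: b => //= x y; rewrite addSnnS leq_add2l. Qed.

Lemma omap_add_mono K a b : ninf_le a b -> ninf_le (omap (addn K) a) (omap (addn K) b).
Proof. by case: a; case: b => //= x y; rewrite leq_add2l. Qed.

Lemma sigc_SPE : SPE owner E F x0 sigc.
Proof.
split; first exact: sigc_valid.
move=> h u hh i tau vt.
set D := deviate sigc i tau.
have vD : valid D.
  move=> j g v ov; rewrite /D /deviate; case: eqP => [ej|_]; last exact: sigc_valid.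
  by apply: vt; rewrite ov.
set pi := outcome D h u.
apply/negP => lt.
case ec: (CostX i (concat_play h pi)) lt => [c'|] lt; last first.
  by move: lt; rewrite /ninf_lt; case: (CostX i _).
case: (classic (exists2 a, a \in h & targetX i a)) => [hit|nhit].
  by move: lt; rewrite -ec /CostX (@concat_cost_hit _ _ (targetX i) h pi (outcome sigc h u) hit) /ninf_lt eqxx andbF.
have nh : forall a, a \in h -> ~~ targetX i a.
  move=> a ah; apply/negP => ta; apply: nhit; by exists a.
case: (rcost_SomeP ec) => tc' bef.
have hc : size h <= c'.
  rewrite leqNgt; apply/negP => hc; move: tc'; rewrite concat_lt // => ta.
  by move: (nh _ (mem_nth (pi 0) hc)); rewrite ta.
set nst := c' - size h.
have pinst : targetX i (pi nst) by move: tc'; rewrite concat_ge.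
have pibef : forall j, j < nst -> ~~ targetX i (pi j).
  move=> j hj; move: (bef (size h + j)); rewrite concat_ge ?leq_addr // addKn; apply.
  by rewrite /nst in hj; lia.
pose hist n := h ++ mkseq pi n.
have hhist : forall n, is_hist x0 (hist n) (pi n) by move=> n; exact: out_hist.
have nohist : forall n, n < nst -> forall a, a \in rcons (hist n) (pi n) -> ~~ targetX i a.
  move=> n hn a; rewrite mem_rcons in_cons mem_cat => /orP [/eqP ->|/orP [/nh //|]].
    exact: pibef.
  move/mapP => [j]; rewrite mem_iota add0n => /andP [_ hj] ->; apply: pibef; exact: ltn_trans hj hn.
pose A n := let: (R, t, _) := refst (hist n) (pi n) in
            CostX i (concat_play (hist n) (fun k => R (t + k))).
have A0 : A 0 = CostX i (concat_play h (outcome sigc h u)).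
  rewrite /A /hist /= cats0 ?out0.
  have := Inv_hist hh; rewrite /Inv; have := refst_last h u.
  case e: (refst h u) => [[R t] v] /= ev [Rt [P _]]; subst v.
  apply: rcost_ext => k; rewrite /concat_play; case: ifP => hk.
    exact: set_nth_default.
  by rewrite (sigc_out e Rt P _).1.
have Aend : ninf_le (A nst) (Some c').
  rewrite /A; have := Inv_hist (hhist nst); rewrite /Inv.
  case: (refst (hist nst) (pi nst)) => [[R t] v] [Rt _].
  have -> : c' = size (hist nst) by rewrite /hist size_cat size_mkseq /nst; lia.
  apply: rcost_le; by rewrite concat_ge // subnn addn0 Rt.
have Astep : forall n, n < nst -> ninf_le (A n) (A n.+1).
  move=> n hn; rewrite /A.
  have := Inv_hist (hhist n); rewrite /Inv; have := refst_last (hist n) (pi n).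
  have ehs : hist n.+1 = rcons (hist n) (pi n) by rewrite /hist mkseqS rcons_cat.
  rewrite ehs refst_rcons.
  case e: (refst (hist n) (pi n)) => [[R t] v] /= ev [Rt [P C]]; subst v.
  have epi : pi n.+1 = D (own (pi n)) (hist n) (pi n) by rewrite /pi outSn.
  case: ifP => [/eqP eR|neR].
    have -> : CostX i (concat_play (hist n) (fun k => R (t + k))) =
              CostX i (concat_play (rcons (hist n) (pi n)) (fun k => R (t.+1 + k))).
      apply: rcost_ext => k; rewrite concat_shift addn0 Rt.
      by have -> : (fun n0 => R (t + n0.+1)) = (fun k => R (t.+1 + k))
        by apply: functional_extensionality => m; rewrite addnS.
    exact: nle_refl.
  have oi : own (pi n) = i.
    apply: NNPP => ne; move: neR epi; rewrite /D /deviate (introF eqP ne) /sigc e Rt eqxx.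
    have Pt := P t; rewrite Rt in Pt; rewrite Pt /= => /negbT /eqP ne2 e2; apply: ne2; by rewrite e2.
  have ew : EX (pi n) (pi n.+1) by apply: out_play vD _.
  have cw : connect EX x0 (pi n.+1) := hist_reach (hhist n.+1).
  have cv : connect EX x0 (pi n) := hist_reach (hhist n).
  rewrite /CostX concat_cost_nohit; last first.
    move=> a ah; apply: (nohist n hn); by rewrite mem_rcons in_cons ah orbT.
  rewrite concat_cost_nohit; last exact: nohist.
  rewrite size_rcons oi.
  have -> : rcost (targetX i) (fun k => pun i (pi n.+1) (0 + k)) = CostX i (pun i (pi n.+1)) by [].
  apply: omap_add_le2.
  have C1 : ninf_le (CostX i (fun k => R (t + k))) (lam (pi n)) by move: (C t); rewrite Rt oi.
  apply: nle_trans C1 _.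
  have ni : own (pi n) \notin (pi n).2 by rewrite oi; exact: pibef.
  rewrite (hfix cv ni) oi.
  apply: nle_trans (succ_inf_le (ex_intro _ (pi n.+1) (conj ew erefl))) _.
  case: (punP i cw) => _ Hmax.
  have Hsup : ninf_le (ninf_sup (fun d => exists rho, Lam lam (pi n.+1) rho /\ d = CostX i rho))
                      (CostX i (pun i (pi n.+1))).
    by apply: sup_least => x [rho [L ->]]; exact: Hmax.
  move: Hsup; case: (ninf_sup _) => [a|]; by case: (CostX i (pun i (pi n.+1))).
have chain : forall n, n <= nst -> ninf_le (A 0) (A n).
  elim=> [|n IH] hn; first exact: nle_refl.
  apply: nle_trans (IH (ltnW hn)) (Astep n hn).
move: (nle_trans (chain nst (leqnn _)) Aend); rewrite A0 => hle.
move: lt; rewrite /ninf_lt => /andP [h1 h2].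
by rewrite (nle_anti h1 hle) eqxx in h2.
Qed.

Lemma sigc_outcome : rho0 0 = x0 -> forall n, outcome sigc [::] x0 n = rho0 n.
Proof.
move=> e0 n; have := @sigc_out [::] x0 rho0 0 erefl e0 hrho.1 n.
by case=> -> _.
Qed.

End Back.

Theorem theorem2p10
  (Pi V : finType) (owner : V -> Pi) (E : rel V) (F : Pi -> {set V}) (v0 : V)
  (hV : 2 <= #|V|) (hPi : #|Pi| <= #|V|)
  (hE : forall v : V, exists v' : V, E v v')
  (J : seq {set Pi})
  (hJuniq : uniq J)
  (hJreach : forall I : {set Pi},
      I \in J <-> exists v : V, connect (EX E F) (x0_of F v0) (v, I))
  (hJorder : forall m n : nat, m < size J -> n < size J ->
      nth set0 J m != nth set0 J n ->
      (exists v v' : V, connect (EX E F) (v, nth set0 J m) (v', nth set0 J n)) ->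
      m < n)
  (kstar : nat)
  (hkstar : forall (m : nat) (u : VX Pi V),
      (lam_seq owner E F J (kstar + m)).1 u = (lam_seq owner E F J kstar).1 u)
  (rho0 : nat -> VX Pi V)
  (hrho0 : is_play (EX E F) rho0 /\ rho0 0 = x0_of F v0) :
  (exists sigma : profile Pi V,
      SPE owner E F (x0_of F v0) sigma /\
      forall n, outcome owner sigma [::] (x0_of F v0) n = rho0 n)
  <->
  Lambda owner E F (lam_seq owner E F J kstar).1 (x0_of F v0) rho0.
Proof.
set x0 := x0_of F v0.
set lamS := (lam_seq owner E F J kstar).1.
have hist0 : is_history E F x0 [::] x0 by [].
split.
  move=> [sigma [hS hout]].
  have := Pgood_Lam hS (Pgood_lam_seq hS J kstar) hist0.
  by rewrite (functional_extensionality _ _ hout).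
move=> L.
have hne : forall u, connect (EX E F) x0 u -> exists rho, Lambda owner E F lamS u rho.
  move=> u cu; case: (reach_hist cu) => h hh.
  have hS := slim_SPE owner F x0 hE.
  eexists; exact: (Pgood_Lam hS (Pgood_lam_seq hS J kstar) hh).
have hfix : forall u, connect (EX E F) x0 u -> ownerX owner u \notin u.2 ->
  lamS u = ninf_succ (ninf_inf (fun c => exists u', EX E F u u' /\
             c = ninf_sup (fun d => exists rho, Lambda owner E F lamS u' rho /\ d = CostX (ownerX owner u) rho))).
  move=> u cu ni.
  have uJ : u.2 \in J by apply/hJreach; exists u.1; case: u cu {ni}.
  have fx := lam_fix hkstar; rewrite -/lamS in fx.
  by rewrite -{1}fx /update drop0 uJ (negbTE ni).
eexists; split.
  exact: (sigc_SPE hE hfix hne L).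
exact: (sigc_outcome L hrho0.2).
Qed.
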